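(* There is a unique $q_0\approx0.989681$ such that $\delta(q)>0$ for $q>q_0$ and $\delta(q)<0$ for $q<q_0$.
   Context: For $q\in\mathbb{R}$ define $\delta(q)=\frac{1-(2/\pi)^{3q-8/5}}{3q-8/5}-\frac1{3q}$ if $q>0$, $q\ne\frac8{15}$; $\delta(\frac8{15})=-\ln\frac2\pi-\frac58$; and $\delta(q)=-\infty$ if $q\le0$. (This is the limit as $x\to\pi/2^-$ of $\frac{U_{3q-8/5}(\sin x/x)}{U_q(\cos x)}-\frac13$, where $U_p(s)=\frac{1-s^p}{p}$, $U_0(s)=-\ln s$.) *)

(* Defs.v *)
From Stdlib Require Import Reals.
From Coquelicot Require Import Coquelicot.
Open Scope R_scope.

Definition delta (q : R) : Rbar :=
  if Rle_dec q 0 then m_infty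
  else if Req_EM_T q (8/15) then Finite (- ln (2 / PI) - 5/8)
  else Finite ((1 - Rpower (2 / PI) (3*q - 8/5)) / (3*q - 8/5) - 1 / (3*q)).

(* Main.v *)
Require Import Defs.
From Stdlib Require Import Reals Lra Ranalysis5 Machin FunctionalExtensionality.
From Coquelicot Require Import Coquelicot.
Open Scope R_scope.
Lemma PI_bnd : 314159265/100000000 <= PI <= 314159266/100000000.
Proof.
pose proof (PI_2_3_7_ineq 6) as [H1 H2].
unfold tg_alt, PI_2_3_7_tg, Ratan_seq in H1, H2. simpl in H1, H2.
lra.
Qed.

Lemma Dn_exp : forall k, Derive_n exp k = exp.
Proof.
induction k as [|k IH]; [reflexivity|].
simpl. rewrite IH. apply functional_extensionality. intro t.
apply is_derive_unique. apply is_derive_Reals. apply derivable_pt_lim_exp.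
Qed.

Definition T (n : nat) (y : R) := sum_f_R0 (fun m => y ^ m / INR (Factorial.fact m)) n.

Lemma exp_taylor : forall n y, 0 < y ->
  T n y <= exp y /\ exp y <= T n y + y ^ S n / INR (Factorial.fact (S n)) * exp y.
Proof.
intros n y Hy.
destruct (Taylor_Lagrange exp n 0 y Hy) as [z [Hz E]].
{ intros t _ k _. destruct k; [exact I|]. simpl. rewrite Dn_exp.
  exists (exp t). apply is_derive_Reals, derivable_pt_lim_exp. }
rewrite Dn_exp in E.
replace (sum_f_R0 _ n) with (T n y) in E.
2:{ unfold T; apply sum_eq; intros; rewrite Dn_exp, exp_0, Rminus_0_r; ring. }
rewrite Rminus_0_r in E.
assert (P: 0 < y ^ S n / INR (Factorial.fact (S n))).
{ apply Rdiv_lt_0_compat. apply pow_lt; lra. apply lt_0_INR, Factorial.lt_O_fact. }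
assert (exp z < exp y) by (apply exp_increasing; lra).
pose proof (exp_pos z).
split; nra.
Qed.

Lemma exp_lo : forall n y, 0 < y -> T n y <= exp y.
Proof. intros; apply exp_taylor; auto. Qed.
Lemma exp_hi : forall n y, 0 < y -> y ^ S n / INR (Factorial.fact (S n)) < 1 ->
   exp y <= T n y / (1 - y ^ S n / INR (Factorial.fact (S n))).
Proof. intros n y Hy Hr. destruct (exp_taylor n y Hy) as [_ H].
  apply Rle_div_r; [lra|]. nra. Qed.

Ltac numT := unfold T; cbn [sum_f_R0]; rewrite ?fact_simpl, ?mult_INR; cbn [Factorial.fact];
  rewrite ?INR_IZR_INZ; cbn [Z.of_nat Pos.of_succ_nat Pos.succ]; cbn [pow].
Lemma E1 : PI/2 < exp (45158271/100000000).
Proof. pose proof PI_bnd. eapply Rlt_le_trans; [|apply (exp_lo 11); lra].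
 numT. lra. Qed.
Lemma E2 : exp (45158270/100000000) < PI/2.
Proof. pose proof PI_bnd. eapply Rle_lt_trans; [apply (exp_hi 11); [lra|numT; lra]|].
 numT. lra. Qed.
Lemma E3 : exp (45158271/100000000 * (13690415/10000000)) < 1 + 5/8 * (13690415/10000000).
Proof. eapply Rle_lt_trans; [apply (exp_hi 11); [lra|numT; lra]|].
 numT. lra. Qed.
Lemma E4 : 1 + 5/8 * (13690445/10000000) < exp (45158270/100000000 * (13690445/10000000)).
Proof. eapply Rlt_le_trans; [|apply (exp_lo 11); lra].
 numT. lra. Qed.

Definition aa := ln (PI/2).
Definition psi (p : R) := aa * p - ln (1 + 5/8 * p).
Definition dpsi (p : R) := aa - 5/8 / (1 + 5/8 * p).

Lemma PI2_pos : 0 < PI/2. Proof. pose proof PI_bnd; lra. Qed.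

Lemma aa_bnd : 45158270/100000000 < aa < 45158271/100000000.
Proof. unfold aa. split.
- rewrite <- (ln_exp (45158270/100000000)). apply ln_increasing. apply exp_pos. apply E2.
- rewrite <- (ln_exp (45158271/100000000)). apply ln_increasing. apply PI2_pos. apply E1.
Qed.

Lemma psi_deriv : forall p, -8/5 < p -> derivable_pt_lim psi p (dpsi p).
Proof. intros p Hp. apply is_derive_Reals. unfold psi, dpsi.
 auto_derive. lra. field. lra. Qed.

Lemma dpsi_eq : forall p, -8/5 < p -> dpsi p = (aa*(8+5*p) - 5)/(8+5*p).
Proof. intros; unfold dpsi; field; lra. Qed.

Definition ps := (5 - 8*aa)/(5*aa).

Lemma ps_eq : ps * (5*aa) = 5 - 8*aa.
Proof. pose proof aa_bnd. unfold ps. field. lra. Qed.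

Lemma dpsi_neg : forall p, -8/5 < p -> p < ps -> dpsi p < 0.
Proof. intros p H1 H2. pose proof aa_bnd. rewrite dpsi_eq by lra.
 pose proof ps_eq. apply Rdiv_neg_pos; nra. Qed.

Lemma dpsi_pos : forall p, -8/5 < p -> ps < p -> 0 < dpsi p.
Proof. intros p H1 H2. pose proof aa_bnd. rewrite dpsi_eq by lra.
 pose proof ps_eq. apply Rdiv_lt_0_compat; nra. Qed.

Lemma ps_bnd : 0 < ps < 13690415/10000000.
Proof. pose proof aa_bnd. unfold ps. split.
 apply Rdiv_lt_0_compat; lra. pose proof ps_eq. unfold ps in *. nra. Qed.

Lemma psi0 : psi 0 = 0.
Proof. unfold psi. replace (1 + 5/8*0) with 1 by ring. rewrite ln_1. ring. Qed.

Lemma psi_L : psi (13690415/10000000) < 0.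
Proof. unfold psi. pose proof aa_bnd. pose proof E3.
 assert (aa * (13690415/10000000) < ln (1 + 5/8 * (13690415/10000000))); [|lra].
 rewrite <- (ln_exp (aa * _)). apply ln_increasing. apply exp_pos.
 eapply Rlt_trans; [|apply E3]. apply exp_increasing. nra. Qed.

Lemma psi_R : 0 < psi (13690445/10000000).
Proof. unfold psi. pose proof aa_bnd.
 assert (ln (1 + 5/8 * (13690445/10000000)) < aa * (13690445/10000000)); [|lra].
 rewrite <- (ln_exp (aa * _)). apply ln_increasing. lra.
 eapply Rlt_trans; [apply E4|]. apply exp_increasing. nra. Qed.

Lemma root : { p0 | 13690415/10000000 < p0 < 13690445/10000000 /\ psi p0 = 0 }.
Proof.
 destruct (IVT_interv psi (13690415/10000000) (13690445/10000000)) as [z [Hz Ez]].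
 - intros x Hx. apply derivable_continuous_pt. exists (dpsi x). apply psi_deriv; lra.
 - lra.
 - apply psi_L.
 - apply psi_R.
 - exists z. split; [|exact Ez]. pose proof psi_L; pose proof psi_R.
   destruct Hz as [[H1|H1] [H2|H2]]; subst; try lra.
Qed.

Lemma mvt : forall x y, -8/5 < x -> x < y -> exists c, psi y - psi x = dpsi c * (y - x) /\ x < c < y.
Proof. intros x y Hx Hxy. apply MVT_cor2; auto. intros c Hc; apply psi_deriv; lra. Qed.

Lemma psi_sign : forall p0, 13690415/10000000 < p0 -> psi p0 = 0 ->
  (forall p, -8/5 < p < 0 -> 0 < psi p) /\
  (forall p, 0 < p < p0 -> psi p < 0) /\
  (forall p, p0 < p -> 0 < psi p).
Proof.
 intros p0 Hp0 E. pose proof ps_bnd. pose proof psi0. split; [|split].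
 - intros p Hp. destruct (mvt p 0) as [c [Ec Hc]]; try lra.
   pose proof (dpsi_neg c ltac:(lra) ltac:(lra)). nra.
 - intros p Hp. destruct (Rle_lt_dec p ps).
   + destruct (mvt 0 p) as [c [Ec Hc]]; try lra.
     pose proof (dpsi_neg c ltac:(lra) ltac:(lra)). nra.
   + destruct (mvt p p0) as [c [Ec Hc]]; try lra.
     pose proof (dpsi_pos c ltac:(lra) ltac:(lra)). nra.
 - intros p Hp. destruct (mvt p0 p) as [c [Ec Hc]]; try lra.
   pose proof (dpsi_pos c ltac:(lra) ltac:(lra)). nra.
Qed.

Lemma Rpow_eq : forall p, Rpower (2/PI) p = / exp (aa * p).
Proof. intro p. unfold Rpower, aa. pose proof PI2_pos.
 replace (2/PI) with (/ (PI/2)) by (field; lra).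
 rewrite ln_Rinv by lra. rewrite <- exp_Ropp. f_equal. ring. Qed.

Lemma X_eq : forall q, 0 < q -> 3*q - 8/5 <> 0 ->
  (1 - Rpower (2 / PI) (3*q - 8/5)) / (3*q - 8/5) - 1 / (3*q) =
  8/5 * (exp (aa*(3*q-8/5)) - (1 + 5/8*(3*q-8/5))) / (exp (aa*(3*q-8/5)) * (3*q-8/5) * (3*q)).
Proof. intros q Hq Hp. rewrite Rpow_eq. pose proof (exp_pos (aa*(3*q-8/5))).
 field. repeat split; lra. Qed.

Lemma F_gt : forall p, -8/5 < p -> 0 < psi p -> 1 + 5/8*p < exp (aa*p).
Proof. intros p Hp H. unfold psi in H. rewrite <- (exp_ln (1+5/8*p)) by lra.
 apply exp_increasing. lra. Qed.
Lemma F_lt : forall p, -8/5 < p -> psi p < 0 -> exp (aa*p) < 1 + 5/8*p.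
Proof. intros p Hp H. unfold psi in H. rewrite <- (exp_ln (1+5/8*p)) by lra.
 apply exp_increasing. lra. Qed.

Lemma delta_neg_le0 : forall q, q <= 0 -> Rbar_lt (delta q) (Finite 0).
Proof. intros q Hq. unfold delta. destruct (Rle_dec q 0); [simpl; exact I| lra]. Qed.

Lemma d_neg_aux : forall x, Rbar_lt (Finite 0) x -> Rbar_lt x (Finite 0) -> False.
Proof. intros [x| |] H1 H2; simpl in *; auto; lra. Qed.

Theorem lemma10 :
  exists! q0 : R,
    (forall q : R, q > q0 -> Rbar_lt (Finite 0) (delta q)) /\
    (forall q : R, q < q0 -> Rbar_lt (delta q) (Finite 0)) /\
    9896805 / 10000000 <= q0 < 9896815 / 10000000.
Proof.
  destruct root as [p0 [Hb E]].
  destruct (psi_sign p0 ltac:(lra) E) as [S1 [S2 S3]].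
  pose proof ps_bnd as Hps.
  assert (P : (forall q : R, q > (p0+8/5)/3 -> Rbar_lt (Finite 0) (delta q)) /\
    (forall q : R, q < (p0+8/5)/3 -> Rbar_lt (delta q) (Finite 0)) /\
    9896805 / 10000000 <= (p0+8/5)/3 < 9896815 / 10000000).
  { split; [|split].
    - intros q Hq. unfold delta.
      destruct (Rle_dec q 0); [lra|].
      destruct (Req_EM_T q (8/15)); [lra|]. simpl.
      rewrite X_eq by lra.
      pose proof (F_gt (3*q-8/5) ltac:(lra) (S3 (3*q-8/5) ltac:(lra))).
      pose proof (exp_pos (aa*(3*q-8/5))).
      apply Rdiv_lt_0_compat; [lra|].
      apply Rmult_lt_0_compat; [apply Rmult_lt_0_compat|]; lra.
    - intros q Hq. destruct (Rle_dec q 0) as [Hq0|Hq0].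
      + apply delta_neg_le0; exact Hq0.
      + unfold delta. destruct (Rle_dec q 0); [lra|].
        destruct (Req_EM_T q (8/15)).
        * simpl. pose proof aa_bnd. pose proof PI2_pos.
          replace (2/PI) with (/ (PI/2)) by (field; lra).
          rewrite ln_Rinv by lra. fold aa. lra.
        * simpl. rewrite X_eq by lra.
          pose proof (exp_pos (aa*(3*q-8/5))).
          destruct (Rlt_dec (3*q-8/5) 0).
          -- pose proof (F_gt (3*q-8/5) ltac:(lra) (S1 (3*q-8/5) ltac:(lra))).
             apply Rdiv_pos_neg; [lra|].
             assert (0 < exp (aa * (3 * q - 8 / 5)) * (3*q)) by (apply Rmult_lt_0_compat; lra).
             nra.
          -- assert (0 < 3*q-8/5) by (assert (3*q-8/5 <> 0) by lra; lra).
             pose proof (F_lt (3*q-8/5) ltac:(lra) (S2 (3*q-8/5) ltac:(lra))).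
             apply Rdiv_neg_pos; [lra|].
             apply Rmult_lt_0_compat; [apply Rmult_lt_0_compat|]; lra.
    - lra. }
  exists ((p0+8/5)/3). split; [exact P|].
  intros y [Hy1 [Hy2 _]]. destruct P as [P1 [P2 _]].
  destruct (Rtotal_order y ((p0+8/5)/3)) as [H|[H|H]].
  - exfalso. set (q := (y + (p0+8/5)/3)/2).
    apply (d_neg_aux (delta q)); [apply Hy1 | apply P2]; unfold q; lra.
  - symmetry; exact H.
  - exfalso. set (q := (y + (p0+8/5)/3)/2).
    apply (d_neg_aux (delta q)); [apply P1 | apply Hy2]; unfold q; lra.
Qed.
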